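(* Let $\bar u=\langle F_i\mid i<\omega\rangle$, with maps $f^m_n\in\ddagger\mathcal{F}_P(F_m,F_n)$, be a Fraïssé sequence for the category $\ddagger\mathcal{F}_P$, and let $(\mathbb F,E)$ be its limit. Then $E\subseteq\mathrm{End}(\mathbb F)$ and $E$ is dense in $\mathbb F$.
   Context: Fix $P\subseteq\{3,4,\ldots,\infty\}$. A finite tree is viewed as a graph with reflexive symmetric edge relation $R$. For finite trees $A,B$, a monotone epimorphism $f\colon B\to A$ (edges map onto edges and preimages of connected sets are connected) is weakly coherent at a vertex $a\in A$ with $\mathrm{ord}(a)=n\geq 3$ if there is $b\in f^{-1}(a)$ (the witness) with $\mathrm{ord}(b)\geq n$ such that the preimages under $f$ of the $n$ distinct connected components of $A\setminus\{a\}$ lie in $n$ distinct connected components of $B\setminus\{b\}$; $f$ is weakly coherent if this holds at every $a$ with $\mathrm{ord}(a)\geq3$. The category $\ddagger\mathcal{F}_P$: objects are finite trees $A$ having at least one ramification point, in which every vertex is an endpoint or a ramification point, each ramification point $a$ carries exactly one label $p\in P$ (unary predicate $U_p(a)$) with $\mathrm{ord}(a)\leq p$, and endpoints carry no label. An arrow $f\in\ddagger\mathcal{F}_P(B,A)$ is a pair $(p(f),e(f))$ where $p(f)\colon B\to A$ is a weakly coherent epimorphism of trees such that whenever $U_p(a)$ holds and $b$ witnesses the weak coherence of $p(f)$ at $a$, then $U_p(b)$ holds; and $e(f)\colon\mathrm{End}(A)\to\mathrm{End}(B)$ is a map with $p(f)\circ e(f)=\mathrm{Id}_{\mathrm{End}(A)}$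 (here $\mathrm{End}(X)$ is the set of endpoints). Composition is $f\circ g=(p(f)\circ p(g),e(g)\circ e(f))$. A Fraïssé sequence for $\ddagger\mathcal{F}_P$ is a sequence $\langle F_n\rangle$ with arrows $f^m_n\in\ddagger\mathcal{F}_P(F_m,F_n)$ such that (1) for every object $X$ there is $n$ with $\ddagger\mathcal{F}_P(F_n,X)\neq\varnothing$, and (2) for every $n$ and every arrow $f\in\ddagger\mathcal{F}_P(Y,F_n)$ there exist $m\geq n$ and $g\in\ddagger\mathcal{F}_P(F_m,Y)$ with $f\circ g=f^m_n$. The limit of such a sequence is the pair $(\mathbb F,E)$, where $\mathbb F\subseteq\prod_i F_i$ is the inverse limit (as a topological graph, with product topology of discrete spaces) of the projections $p(f^{m}_n)$, with canonical projections $f_m\colon\mathbb F\to F_m$, and $E$ is the direct limit of the embedding parts $e(f^m_n)$, i.e. the countable set of points of $\mathbb F$ determined by sequences of the form $(p(f^m_0)(y),\ldots,p(f^m_{m-1})(y),y,e(f^{m+1}_m)(y),e(f^{m+2}_m)(y),\ldots)$ for $y\in\mathrm{End}(F_m)$. An endpoint of a topological graph $G$ is a vertex $x$ such that whenever an arc is embedded in $G$ through $x$, $x$ is the image of an endpoint of the arc. *)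

(* Defs.v *)
From mathcomp Require Import all_boot.
Set Implicit Arguments. Unset Strict Implicit. Unset Printing Implicit Defensive.

(* Extended naturals {0,1,...,oo}: [Some n] = n, [None] = infinity. *)
Definition ext_nat := option nat.
Definition le_ext (k : nat) (p : ext_nat) : bool :=
  match p with Some n => k <= n | None => true end.

Section FinGraph.
Variables (V : finType) (R : rel V).

Definition ord (a : V) : nat := #|[set b | (b != a) && R a b]|.
Definition is_endpoint (a : V) : bool := ord a == 1.
Definition is_ram (a : V) : bool := 3 <= ord a.

Definition adj : rel V := fun x y => (x != y) && R x y.

Definition is_tree : Prop :=
  (forall x y, connect R x y) /\
  (forall c : seq V, 3 <= size c -> uniq c -> ~~ cycle adj c).

Definition connected_set (S : {set V}) : Prop :=
  forall x y, x \in S -> y \in S ->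
    connect (fun u v => [&& u \in S, v \in S & R u v]) x y.

Definition same_comp (a x y : V) : bool :=
  [&& x != a, y != a & connect (fun u v => [&& u != a, v != a & R u v]) x y].
End FinGraph.

Section Maps.
Variables (B A : finType) (RB : rel B) (RA : rel A) (f : B -> A).

Definition monotone_epi : Prop :=
  (forall b b', RB b b' -> RA (f b) (f b')) /\
  (forall a a', RA a a' -> exists b b', [/\ RB b b', f b = a & f b' = a']) /\
  (forall S : {set A}, connected_set RA S -> connected_set RB (f @^-1: S)).

Definition wc_witness (a : A) (b : B) : Prop :=
  [/\ f b = a, ord RA a <= ord RB b,
     (forall b1 b2, f b1 != a -> f b2 != a ->
        same_comp RA a (f b1) (f b2) -> same_comp RB b b1 b2)
   & (forall b1 b2, f b1 != a -> f b2 != a ->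
        same_comp RB b b1 b2 -> same_comp RA a (f b1) (f b2))].

Definition weakly_coherent : Prop :=
  forall a, 3 <= ord RA a -> exists b, wc_witness a b.
End Maps.

Record tobj (P : ext_nat -> Prop) := TObj {
  tV : finType;
  tR : rel tV;
  (* tlab a = Some p : a carries the (unique) label p; None : no label *)
  tlab : tV -> option ext_nat;
  t_refl : reflexive tR;
  t_sym : symmetric tR;
  t_tree : is_tree tR;
  t_has_ram : exists a, is_ram tR a;
  t_vert : forall a, is_endpoint tR a || is_ram tR a;
  t_lab_ram : forall a, is_ram tR a ->
      exists p, [/\ tlab a = Some p, P p & le_ext (ord tR a) p];
  t_lab_end : forall a, is_endpoint tR a -> tlab a = None
}.

Arguments tV {P} t.
Arguments tR {P} t.
Arguments tlab {P t}.
Definition EndT P (A : tobj P) := {x : tV A | is_endpoint (tR A) x}.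

Record tarr P (B A : tobj P) := TArr {
  pm : tV B -> tV A;
  em : EndT A -> EndT B;
  pm_epi : monotone_epi (tR B) (tR A) pm;
  pm_wc : weakly_coherent (tR B) (tR A) pm;
  pm_lab : forall a (p : ext_nat), 3 <= ord (tR A) a -> tlab a = Some p ->
      forall b, wc_witness (tR B) (tR A) pm a b -> tlab b = Some p;
  pm_em : forall y : EndT A, pm (val (em y)) = val y
}.

Arguments pm {P B A} t.
Arguments em {P B A} t.

Section Seq.
Local Unset Implicit Arguments.
Variable P : ext_nat -> Prop.
Variable F : nat -> tobj P.
Variable fb : forall n, tarr (F n.+1) (F n).

Fixpoint pcomp (n k : nat) : tV (F (k + n)) -> tV (F n) :=
  match k return tV (F (k + n)) -> tV (F n) with
  | 0 => fun x => x
  | k'.+1 => fun x => pcomp n k' (pm (fb (k' + n)) x)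
  end.

Fixpoint ecomp (n k : nat) : EndT (F n) -> EndT (F (k + n)) :=
  match k return EndT (F n) -> EndT (F (k + n)) with
  | 0 => fun y => y
  | k'.+1 => fun y => em (fb (k' + n)) (ecomp n k' y)
  end.

Definition fraisse_seq : Prop :=
  (forall X : tobj P, exists n, inhabited (tarr (F n) X)) /\
  (forall n (Y : tobj P) (f : tarr Y (F n)),
     exists k (g : tarr (F (k + n)) Y),
       (forall x, pm f (pm g x) = pcomp n k x) /\
       (forall y, em g (em f y) = ecomp n k y)).

Definition pt := forall i, tV (F i).
Definition pt_eq (x y : pt) : Prop := forall i, x i = y i.

Definition inLim (x : pt) : Prop := forall i, pm (fb i) (x i.+1) = x i.
Definition limR (x y : pt) : Prop := forall i, tR (F i) (x i) (y i).

(* S is closed relative to A (product topology of discrete spaces) *)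
Definition relclosed (A S : pt -> Prop) : Prop :=
  forall x, A x ->
    (forall n, exists s, S s /\ forall i, i <= n -> s i = x i) -> S x.

Definition connectedT (A : pt -> Prop) : Prop :=
  ~ exists S T : pt -> Prop,
      [/\ forall x, A x <-> S x \/ T x,
          forall x, ~ (S x /\ T x),
          (exists x, S x) /\ (exists x, T x),
          relclosed A S /\ relclosed A T
        & forall x y, S x -> T y -> ~ limR x y].

Definition nonsep (A : pt -> Prop) (x : pt) : Prop :=
  A x /\ connectedT (fun y => A y /\ ~ pt_eq y x).

Definition isArc (A : pt -> Prop) : Prop :=
  connectedT A /\
  exists a b, [/\ ~ pt_eq a b, nonsep A a, nonsep A b &
               forall c, nonsep A c -> pt_eq c a \/ pt_eq c b].

(* endpoints of 𝔽: for every arc embedded (as a closed induced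
   subgraph) in 𝔽 through x, x is an endpoint of that arc *)
Definition isEndLim (x : pt) : Prop :=
  inLim x /\
  forall A : pt -> Prop,
    (forall y, A y -> inLim y) -> relclosed inLim A -> isArc A -> A x ->
    nonsep A x.

Definition in_E (x : pt) : Prop :=
  inLim x /\
  exists m (y : EndT (F m)), forall k, x (k + m) = val (ecomp m k y).

Definition dense_in_Lim (D : pt -> Prop) : Prop :=
  forall x, inLim x -> forall n, exists e, D e /\ forall i, i <= n -> e i = x i.
End Seq.
Arguments pcomp {P F} fb n k.
Arguments ecomp {P F} fb n k.
Arguments fraisse_seq {P F} fb.
Arguments inLim {P F} fb x.
Arguments limR {P F} x y.
Arguments relclosed {P F} A S.
Arguments connectedT {P F} A.
Arguments nonsep {P F} A x.
Arguments isArc {P F} A.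
Arguments isEndLim {P F} fb x.
Arguments in_E {P F} fb x.
Arguments dense_in_Lim {P F} fb D.

(* Main.v *)
Require Import Defs.
From mathcomp Require Import all_boot.
From Stdlib Require Import Classical FunctionalExtensionality.
Set Implicit Arguments. Unset Strict Implicit. Unset Printing Implicit Defensive.

Lemma lift_connect (T T' : finType) (e : rel T) (e' : rel T') (h : T -> T') :
  (forall x y, e x y -> connect e' (h x) (h y)) ->
  forall x y, connect e x y -> connect e' (h x) (h y).
Proof.
move=> H x y /connectP [p pp ->]; elim: p x pp => [|z p IH] x /=.
  by rewrite connect0.
case/andP=> exz pz; exact: connect_trans (H _ _ exz) (IH _ pz).
Qed.

Lemma uniq_adj_path (T : eqType) (e : rel T) x p :
  path e x p -> uniq (x :: p) -> path (fun a b => (a != b) && e a b) x p.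
Proof.
elim: p x => [|y p IH] x //= /andP [exy py] /andP [xn up].
rewrite exy andbT IH // andbT; apply/negP=> /eqP exy'; subst y.
by rewrite inE eqxx in xn.
Qed.

Lemma path_restr_all (T : finType) (R : rel T) (S : {set T}) x p :
  path (fun u v => [&& u \in S, v \in S & R u v]) x p -> all (mem S) p.
Proof.
elim: p x => [|y p IH] x //= /andP [/and3P [_ yS _] py]; rewrite yS /=; exact: IH py.
Qed.

Lemma path_restr_R (T : finType) (R : rel T) (S : {set T}) x p :
  path (fun u v => [&& u \in S, v \in S & R u v]) x p -> path R x p.
Proof.
elim: p x => [|y p IH] x //= /andP [/and3P [_ _ r] py]; rewrite r /=; exact: IH py.
Qed.

Lemma cross_edge (T : finType) (e : rel T) (Q : pred T) a b :
  connect e a b -> Q a -> ~~ Q b -> exists u v, [&& Q u, ~~ Q v & e u v].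
Proof.
move=> /connectP [p pp ->]; elim: p a pp => [|z p IH] a /=.
  by move=> _ ->.
case/andP=> eaz pz Qa nQ; case Qz: (Q z).
  exact: IH pz Qz nQ.
by exists a, z; rewrite Qa Qz eaz.
Qed.

Section Tree.
Variables (V : finType) (R : rel V).
Hypotheses (Rsym : symmetric R) (Rtree : is_tree R).

Lemma crossing_unique (X : {set V}) u u' v v' :
  connected_set R X -> connected_set R (~: X) ->
  u \in X -> u' \in X -> v \notin X -> v' \notin X -> R u v -> R u' v' -> v = v'.
Proof.
move=> cX cY uX u'X vX v'X Ruv Ru'v'.
apply/eqP; apply/negPn/negP => nvv'.
have vY : v \in ~: X by rewrite inE.
have v'Y : v' \in ~: X by rewrite inE.
move: (cY _ _ vY v'Y) => /connectP [p pp lp].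
case: (shortenP pp) lp => pY pYp uY _ lY.
move: (cX _ _ u'X uX) => /connectP [q qp lq].
case: (shortenP qp) lq => pX pXp uX' _ lX.
have allY := path_restr_all pYp.
have allX := path_restr_all pXp.
have pYR := uniq_adj_path (path_restr_R pYp) uY.
have pXR := uniq_adj_path (path_restr_R pXp) uX'.
have szY : 0 < size pY.
  by case: pY {pYp uY allY pYR} lY => [|? ?] //= e; rewrite e eqxx in nvv'.
case: Rtree => _ /(_ ((v :: pY) ++ (u' :: pX))) H; apply: (negP (H _ _)).
- by rewrite size_cat /= addSn addnS ltnS ltnS; apply: leq_trans szY (leq_addr _ _).
- rewrite cat_uniq uY uX' andbT; apply/hasPn => w wX.
  have wX' : w \in X.
    move: wX; rewrite inE => /orP [/eqP -> //|]; by move/allP: allX => H' /H'.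
  rewrite inE negb_or; apply/andP; split.
    by apply/negP=> /eqP e; subst w; rewrite wX' in vX.
  apply/negP=> /(allP allY); by rewrite /= inE wX'.
- rewrite /= rcons_cat rcons_cons cat_path pYR /= -lY.
  rewrite rcons_path pXR -lX /=.
  apply/andP; split.
    apply/andP; split; last by rewrite Rsym.
    by apply/negP=> /eqP e; move: v'X; rewrite e u'X.
  apply/andP; split; last by [].
  by apply/negP=> /eqP e; move: vX; rewrite -e uX.
Qed.

Lemma endpoint_compl x :
  is_endpoint R x -> connected_set R [set y | y != x].
Proof.
move=> ex y z; rewrite !inE => yx zx.
case: Rtree => Hc _; move: (Hc y z) zx => /connectP [p pp ->].
case: (shortenP pp) => p' pp' up' _ {pp} zx.
have xnp : x \notin p'.
  apply/negP=> xp; case/splitPr: xp pp' up' zx => p1 p2.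
  rewrite cat_path => /andP [_ /andP [Rax pp2]] up' zx.
  case: p2 pp2 up' zx => [|w p2].
    by rewrite last_cat /= eqxx.
  move=> /andP [Rxw _] up' _.
  set a := last y p1.
  have aS : a \in y :: p1 by rewrite /a mem_last.
  move: up'; rewrite -cat_cons cat_uniq => /and3P [_ hn u2].
  have ax : a != x.
    apply/negP=> /eqP e; have := hasPn hn x; rewrite -e aS; by move/(_ (mem_head _ _)).
  have aw : a != w.
    apply/negP=> /eqP e; have := hasPn hn w; rewrite -e aS => H.
    have : a \in x :: a :: p2 by rewrite !inE eqxx orbT.
    by move/H.
  have wx : w != x by move: u2 => /= /andP [] ; rewrite inE negb_or eq_sym => /andP [].
  move: ex; rewrite /is_endpoint /ord => /eqP e1.
  have : #|[set a; w]| <= #|[set b | (b != x) && R x b]|.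
    apply: subset_leq_card; apply/subsetP => b; rewrite !inE => /orP [] /eqP ->.
      by rewrite ax Rsym.
    by rewrite wx Rxw.
  by rewrite cards2 aw e1.
apply/connectP; exists p'; last by [].
have : all (fun w => w != x) (y :: p') by rewrite /= yx; apply/allP=> w wp; apply/negP=> /eqP e; subst w; rewrite wp in xnp.
elim: p' y {yx up' xnp zx} pp' => [|w q IH] y //= /andP [Ryw pw] /and3P [yx' wx' ap].
rewrite !inE yx' wx' Ryw /=; apply: IH => //=; by rewrite wx'.
Qed.

End Tree.


Section Pts.
Variables (P : ext_nat -> Prop) (F : nat -> tobj P) (fb : forall n, tarr (F n.+1) (F n)).
Local Notation pt := (Defs.pt P F).

Lemma pt_eqE (a b : pt) : pt_eq P F a b -> a = b.
Proof. move=> h; exact: functional_extensionality_dep h. Qed.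

Lemma inLim_down (a b : pt) : inLim fb a -> inLim fb b ->
  forall j, a j = b j -> forall i, i <= j -> a i = b i.
Proof.
move=> ha hb; elim=> [|j IH] e i.
  by rewrite leqn0 => /eqP ->.
rewrite leq_eqVlt => /orP [/eqP -> //|]; rewrite ltnS; apply: IH.
by rewrite -ha -hb e.
Qed.

Lemma inLim_pcomp (a : pt) : inLim fb a -> forall n k, Defs.pcomp fb n k (a (k + n)) = a n.
Proof.
move=> ha n; elim=> [|k IH] //=.
by rewrite ha IH.
Qed.

Section Cross.
Variables (x : pt) (k : nat).
Hypothesis xL : inLim fb x.
Hypothesis xE : is_endpoint (tR (F k)) (x k).

Local Unset Implicit Arguments.
Fixpoint Xp (j : nat) : tV (F j) -> bool :=
  match j with
  | 0 => fun u => u == x 0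
  | j'.+1 => fun u => if j'.+1 <= k then u == x j'.+1 else @Xp j' (pm (fb j') u)
  end.
Local Set Implicit Arguments.

Lemma XpS j u : k <= j -> Xp j.+1 u = Xp j (pm (fb j) u).
Proof. by move=> h /=; rewrite ltnNge h. Qed.

Lemma Xp_le j u : j <= k -> Xp j u = (u == x j).
Proof. by case: j u => [|j'] u //= ->. Qed.

Lemma Xpk u : Xp k u = (u == x k).
Proof. exact: Xp_le. Qed.

Lemma Xp_pt (a : pt) : inLim fb a -> forall j, k <= j -> Xp j (a j) = (a k == x k).
Proof.
move=> ha; elim=> [|j IH] hj.
  by move: hj; rewrite leqn0 => /eqP e; rewrite -e Xpk.
move: hj; rewrite leq_eqVlt => /orP [/eqP e|hj].
  by rewrite -e Xpk.
by rewrite XpS // ha IH.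
Qed.

Lemma Xp_conn j : k <= j ->
  connected_set (tR (F j)) [set u | Xp j u] /\ connected_set (tR (F j)) [set u | ~~ Xp j u].
Proof.
elim: j => [|j IH] hj.
  move: hj; rewrite leqn0 => /eqP e; move: xE; rewrite e => xE'.
  split.
    move=> u v; rewrite !inE /= => /eqP -> /eqP ->; exact: connect0.
  have -> : [set u | ~~ Xp 0 u] = [set u | u != x 0] by apply/setP=> u; rewrite !inE.
  exact: (endpoint_compl (@t_sym _ (F 0)) (@t_tree _ (F 0)) xE').
move: hj; rewrite leq_eqVlt => /orP [/eqP e|hj].
  move: xE; rewrite e => xE'.
  split.
    move=> u v; rewrite !inE !Xp_le ?e // => /eqP -> /eqP ->; exact: connect0.
  have -> : [set u | ~~ Xp j.+1 u] = [set u | u != x j.+1].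
    by apply/setP=> u; rewrite !inE Xp_le ?e.
  exact: (endpoint_compl (@t_sym _ (F j.+1)) (@t_tree _ (F j.+1)) xE').
have [c1 c2] := IH hj.
case: (pm_epi (fb j)) => _ [_ H].
split.
  have -> : [set u | Xp j.+1 u] = pm (fb j) @^-1: [set u | Xp j u].
    by apply/setP=> u; rewrite !inE XpS.
  exact: H.
have -> : [set u | ~~ Xp j.+1 u] = pm (fb j) @^-1: [set u | ~~ Xp j u].
  by apply/setP=> u; rewrite !inE XpS.
exact: H.
Qed.

Definition cross j (v : tV (F j)) := ~~ Xp j v && [exists u, Xp j u && tR (F j) u v].
Arguments cross : clear implicits.
Definition vv j : tV (F j) := odflt (x j) [pick v | cross j v].

Lemma cross_uniq j v v' : k <= j -> cross j v -> cross j v' -> v = v'.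
Proof.
move=> hj /andP [nv /existsP [u /andP [Xu Ruv]]] /andP [nv' /existsP [u' /andP [Xu' Ruv']]].
have [c1 c2] := Xp_conn hj.
have e : [set u | ~~ Xp j u] = ~: [set u | Xp j u] by apply/setP=> w; rewrite !inE.
rewrite e in c2.
by apply: (crossing_unique (@t_sym _ (F j)) (@t_tree _ (F j)) c1 c2 _ _ _ _ Ruv Ruv'); rewrite inE.
Qed.

Lemma cross_ex j (a b : tV (F j)) : Xp j a -> ~~ Xp j b -> exists v, cross j v.
Proof.
move=> Xa nXb; have [u [v /and3P [Xu nXv Ruv]]] :=
  cross_edge (Q := Xp j) ((t_tree (F j)).1 a b) Xa nXb.
exists v; rewrite /cross nXv /=; apply/existsP; exists u; by rewrite Xu.
Qed.

Lemma vv_cross j : (exists v, cross j v) -> cross j (vv j).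
Proof. by rewrite /vv; case: pickP => [v //|H] [v]; rewrite H. Qed.

Variable s : pt.
Hypotheses (sL : inLim fb s) (sk : s k <> x k).

Lemma Xp_x j : k <= j -> Xp j (x j).
Proof. by move=> hj; rewrite (Xp_pt xL) // eqxx. Qed.

Lemma Xp_s j : k <= j -> ~~ Xp j (s j).
Proof. by move=> hj; rewrite (Xp_pt sL) //; apply/eqP. Qed.

Lemma vv_cross' j : k <= j -> cross j (vv j).
Proof. by move=> hj; apply: vv_cross; apply: (cross_ex (Xp_x hj) (Xp_s hj)). Qed.

Lemma vv_coh j : k <= j -> pm (fb j) (vv j.+1) = vv j.
Proof.
move=> hj; have hj1 : k <= j.+1 by apply: leqW.
move: (vv_cross' hj1) => /andP [nv /existsP [u /andP [Xu Ruv]]].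
apply: (cross_uniq hj) (vv_cross' hj).
rewrite /cross -XpS // nv /=; apply/existsP; exists (pm (fb j) u).
by rewrite -XpS // Xu /=; apply: (pm_epi (fb j)).1.
Qed.

Lemma key (A S T : pt -> Prop) :
  (forall y, A y -> inLim fb y) -> connectedT A -> A x ->
  (forall z, (A z /\ ~ pt_eq P F z x) <-> S z \/ T z) ->
  (forall z, ~ (S z /\ T z)) ->
  relclosed (fun z => A z /\ ~ pt_eq P F z x) S ->
  relclosed (fun z => A z /\ ~ pt_eq P F z x) T ->
  (forall a b, T a -> S b -> ~ limR a b) ->
  S s -> forall j, k <= j -> exists c, S c /\ c j = vv j.
Proof.
move=> AL Ac Ax part disj clS clT eTS Ss j hj.
apply: NNPP => Hno.
have Snx : forall z, S z -> z <> x.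
  move=> z Sz e; have [_ h] := (part z).2 (or_introl Sz); apply: h; by rewrite e.
have SA : forall z, S z -> A z by move=> z Sz; case: ((part z).2 (or_introl Sz)).
have TA : forall z, T z -> A z by move=> z Tz; case: ((part z).2 (or_intror Tz)).
have Xj := Xp_x hj.
have sj := Xp_s hj.
apply: Ac.
exists (fun z => (S z /\ Xp j (z j)) \/ z = x \/ T z), (fun z => S z /\ ~~ Xp j (z j)).
split.
- move=> z; split.
  + move=> Az; case: (classic (z = x)) => [->|nzx]; first by left; right; left.
    have : S z \/ T z by apply/part; split => // /pt_eqE.
    case=> [Sz|Tz]; last by left; right; right.
    by case Xz: (Xp j (z j)); [left; left | right]; split.
  + by case=> [[[Sz _]|[->|Tz]]|[Sz _]]; auto.
- move=> z [[[Sz Xz]|[e|Tz]] [Sz' nXz]].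
  + by rewrite Xz in nXz.
  + exact: Snx Sz' e.
  + exact: disj (conj Sz' Tz).
- split; [exists x; right; left | exists s; split] => //.
- split.
  + move=> z Az H.
    case: (classic (z = x)) => [->|nzx]; first by right; left.
    have : S z \/ T z by apply/part; split => // /pt_eqE.
    case=> [Sz|Tz]; last by right; right.
    case Xz: (Xp j (z j)); first by left.
    exfalso; apply: (disj z); split => //; apply: clT.
      by split => // /pt_eqE.
    move=> n; case: (H (maxn n j)) => b [hb bb].
    have ej : b j = z j by apply: bb; exact: leq_maxr.
    exists b; split; last by move=> i hi; apply: bb; apply: leq_trans hi (leq_maxl _ _).
    case: hb => [[_ Xb]|[eb|//]].
      by move: Xb; rewrite ej Xz.
    by move: Xz; rewrite -ej eb Xj.
  + move=> z Az H.
    case: (H j) => a [[Sa nXa] ha].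
    have ej : a j = z j by apply: ha.
    have nXz : ~~ Xp j (z j) by rewrite -ej.
    split => //; apply: clS.
      split => // /pt_eqE e; by move: nXz; rewrite e Xj.
    by move=> n; case: (H n) => b [[Sb _] hb]; exists b.
- move=> a b [[Sa Xa]|[ea|Ta]] [Sb nXb] Rab.
  + apply: Hno; exists b; split => //.
    apply: (cross_uniq hj) (vv_cross' hj).
    rewrite /cross nXb /=; apply/existsP; exists (a j); rewrite Xa /=; exact: Rab j.
  + apply: Hno; exists b; split => //.
    apply: (cross_uniq hj) (vv_cross' hj).
    rewrite /cross nXb /=; apply/existsP; exists (a j); rewrite ea Xj /=; rewrite -ea; exact: Rab j.
  + exact: eTS _ _ Ta Sb Rab.
Qed.

End Cross.

Lemma part1 (x : pt) : in_E fb x -> isEndLim fb x.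
Proof.
move=> [xL [m [y Hy]]]; split => // A AL Acl [Ac _] Ax; split => //.
move=> [S [T [part disj [[s Ss] [t Tt]] [clS clT] eST]]].
have eTS : forall a b, T a -> S b -> ~ limR a b.
  by move=> a b Ta Sb R; apply: (eST b a Sb Ta) => i; rewrite (@t_sym _ (F i)); exact: R i.
have [sA snx] := (part s).2 (or_introl Ss).
have [tA tnx] := (part t).2 (or_intror Tt).
have sL := AL _ sA.
have tL := AL _ tA.
have [i1 His] : exists i, s i <> x i.
  apply: NNPP => H; apply: snx => i; apply: NNPP => h; apply: H; by exists i.
have [i2 Hit] : exists i, t i <> x i.
  apply: NNPP => H; apply: tnx => i; apply: NNPP => h; apply: H; by exists i.
set k := (i1 + i2) + m.
have sk : s k <> x k.
  move=> e; apply: His; apply: (inLim_down sL xL e); by rewrite /k -addnA leq_addr.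
have tk : t k <> x k.
  move=> e; apply: Hit; apply: (inLim_down tL xL e); exact: leq_trans (leq_addl i1 i2) (leq_addr m _).
have xE : is_endpoint (tR (F k)) (x k) by rewrite /k Hy; exact: valP.
have part' : forall z, (A z /\ ~ pt_eq P F z x) <-> T z \/ S z.
  by move=> z; rewrite part; split; case; auto.
have disj' : forall z, ~ (T z /\ S z) by move=> z [a b]; exact: disj (conj b a).
have keyS := key xL xE sL sk AL Ac Ax part disj clS clT eTS Ss.
have keyT := key xL xE tL tk AL Ac Ax part' disj' clT clS eST Tt.
have [c0 [Sc0 c0k]] := keyS k (leqnn k).
have c0L : inLim fb c0 by apply: AL; case: ((part c0).2 (or_introl Sc0)).
have c0v : forall j, j = k -> c0 j = vv x k j by move=> j ->.
pose q : pt := fun i => if k <= i then vv x k i else c0 i.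
have qL : inLim fb q.
  move=> i; rewrite /q; case: (leqP k i) => hi.
    rewrite (leqW hi); exact: vv_coh _ _ xL xE _ sL sk _ hi.
  case: (leqP k i.+1) => hi'.
    have e : i.+1 = k by apply/eqP; rewrite eqn_leq hi' hi.
    rewrite -(c0v _ e); exact: c0L i.
  exact: c0L i.
have qin : forall S' : pt -> Prop, (forall j, k <= j -> exists c, S' c /\ c j = vv x k j) ->
    (forall c, S' c -> A c) -> relclosed (fun z => A z /\ ~ pt_eq P F z x) S' -> S' q.
  move=> S' kS SA' cl.
  have approx : forall n, exists c, S' c /\ forall i, i <= n -> c i = q i.
    move=> n; have [c [Sc cj]] := kS (maxn n k) (leq_maxr _ _).
    exists c; split => // i hi.
    have e : c (maxn n k) = q (maxn n k) by rewrite /q leq_maxr.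
    exact: (inLim_down (AL _ (SA' _ Sc)) qL e (leq_trans hi (leq_maxl _ _))).
  apply: cl => //; split.
    apply: Acl qL _ => n; case: (approx n) => c [Sc hc]; exists c; split => //; exact: SA' _ Sc.
  move=> e; have := e k; rewrite /q /= leqnn => e'.
  have := vv_cross' xL sL sk (leqnn k).
  by rewrite /cross e' (Xp_x xL (leqnn k)).
apply: (disj q); split.
  apply: qin keyS _ clS => c Sc; by case: ((part c).2 (or_introl Sc)).
apply: qin keyT _ clT => c Tc; by case: ((part c).2 (or_intror Tc)).
Qed.

End Pts.


Section Pts2.
Variables (P : ext_nat -> Prop) (F : nat -> tobj P) (fb : forall n, tarr (F n.+1) (F n)).
Local Notation pt := (Defs.pt P F).

Definition tc i j (h : i = j) (z : tV (F i)) : tV (F j) := ecast l (tV (F l)) h z.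

Lemma tc_id i (h : i = i) z : tc h z = z.
Proof. by rewrite (eq_axiomK h). Qed.

Lemma tc_pm i j (h : i.+1 = j.+1) (h' : i = j) z : pm (fb j) (tc h z) = tc h' (pm (fb i) z).
Proof. case: j / h' h => h; by rewrite !tc_id. Qed.

Lemma pt_tc (e : pt) i j (h : i = j) : e j = tc h (e i).
Proof. by case: j / h. Qed.

Lemma tc_tc i j l (h1 : i = j) (h2 : j = l) (h3 : i = l) z : tc h2 (tc h1 z) = tc h3 z.
Proof. move: h2 h3; case: j / h1; case: l / => h3; by rewrite [RHS]tc_id. Qed.

Lemma G_tc m (G : forall d, tV (F (d + m))) d1 d2 (h : d1 = d2) (h' : d1 + m = d2 + m) :
  G d2 = tc h' (G d1).
Proof. case: d2 / h h' => h'; by rewrite tc_id. Qed.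

Lemma point_from m (G : forall d, tV (F (d + m))) :
  (forall d, pm (fb (d + m)) (G d.+1) = G d) ->
  exists e : pt, inLim fb e /\ forall d, e (d + m) = G d.
Proof.
elim: m G => [|m IH] G H.
  exists (fun i => tc (addn0 i) (G i)); split.
    move=> i /=.
    etransitivity; first exact: (tc_pm (i := i + 0) (j := i) (addn0 i.+1) (addn0 i) (G i.+1)).
    by rewrite H.
  move=> d /=.
  rewrite (G_tc G (esym (addn0 d)) (esym (addn0 (d + 0)))) tc_tc; exact: tc_id.
pose G' (d : nat) : tV (F (d + m)) :=
  match d return tV (F (d + m)) with
  | 0 => pm (fb m) (G 0)
  | d'.+1 => tc (esym (addSnnS d' m)) (G d')
  end.
have H' : forall d, pm (fb (d + m)) (G' d.+1) = G' d.
  case=> [|d] /=; first by rewrite tc_id.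
  etransitivity; first exact: (tc_pm (i := d + m.+1) (j := d.+1 + m) _ (esym (addSnnS d m)) (G d.+1)).
  by rewrite H.
have [e [eL ee]] := IH G' H'.
exists e; split => // d.
rewrite (pt_tc e (addSnnS d m)) (ee d.+1) /= tc_tc; exact: tc_id.
Qed.

Lemma E_of m (y : EndT (F m)) : exists e, in_E fb e /\ e m = val y.
Proof.
have H : forall d, pm (fb (d + m)) (val (ecomp fb m d.+1 y)) = val (ecomp fb m d y).
  move=> d /=; exact: pm_em.
have [e [eL ee]] := point_from H.
exists e; split; last exact: (ee 0).
split => //; exists m, y; exact: ee.
Qed.

End Pts2.


Section Ext.
Variables (P : ext_nat -> Prop) (A : tobj P) (a c1 : tV A).
Hypotheses (ram : is_ram (tR A) a) (ac : a != c1) (Rac : tR A a c1).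
Local Notation V := (tV A).
Local Notation RA := (tR A).
Definition Y := (V + bool)%type.
Definition b2 : Y := inr true.
Definition e1 : Y := inr false.
Definition isac (p q : V) := ((p == a) && (q == c1)) || ((p == c1) && (q == a)).
Definition RY (u v : Y) : bool :=
  match u, v with
  | inl p, inl q => RA p q && ~~ isac p q
  | inl p, inr true => (p == a) || (p == c1)
  | inr true, inl q => (q == a) || (q == c1)
  | inl _, inr false => false
  | inr false, inl _ => false
  | inr _, inr _ => true
  end.
Definition fY (u : Y) : V := match u with inl p => p | inr _ => a end.
Definition labY (u : Y) : option ext_nat :=
  match u with inl p => tlab p | inr true => tlab a | inr false => None end.

Lemma RAsym : symmetric RA. Proof. exact: (@t_sym _ A). Qed.
Lemma RArefl : reflexive RA. Proof. exact: (@t_refl _ A). Qed.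

Lemma isacC p q : isac p q = isac q p.
Proof. by rewrite /isac orbC; congr orb; apply: andbC. Qed.

Lemma isac_pp p : isac p p = false.
Proof.
rewrite /isac; apply/negP => /orP [] /andP [/eqP -> /eqP e]; move: ac; by rewrite e eqxx.
Qed.

Lemma RY_refl : reflexive RY.
Proof. by case=> [p|[]] //=; rewrite RArefl isac_pp. Qed.

Lemma RY_sym : symmetric RY.
Proof. by case=> [p|[]] [q|[]] //=; rewrite RAsym isacC. Qed.

Lemma isac_a q : isac a q = (q == c1).
Proof. rewrite /isac eqxx /= eq_sym (negbTE ac) /=; by rewrite orbF. Qed.

Lemma isac_c1 q : isac c1 q = (q == a).
Proof. by rewrite /isac eqxx eq_sym (negbTE ac). Qed.

Definition phi (p q : V) : Y := if isac p q then b2 else inl q.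

Lemma phi_inj p : injective (phi p).
Proof.
move=> q1 q2; rewrite /phi.
case: (boolP (isac p q1)) => h1; case: (boolP (isac p q2)) => h2 //; last by case.
move=> _; move: h1 h2; rewrite /isac => /orP [] /andP [/eqP -> /eqP ->] /orP [] /andP [/eqP e /eqP ->] //;
  by move: ac; rewrite e eqxx.
Qed.

Lemma N_inl p : [set v | (v != inl p) && RY (inl p) v] = phi p @: [set q | (q != p) && RA p q].
Proof.
apply/setP => v; apply/idP/imsetP.
- rewrite inE; case: v => [q|[]].
  + rewrite /= => /andP [nq /andP [Rpq nac]]; exists q.
      rewrite inE Rpq andbT; apply: contra nq => /eqP e; by rewrite e.
    by rewrite /phi (negbTE nac).
  + rewrite /= => /orP [] /eqP e; subst p.
      exists c1; last by rewrite /phi isac_a eqxx.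
      by rewrite inE eq_sym ac Rac.
    exists a; last by rewrite /phi isac_c1 eqxx.
    by rewrite inE ac RAsym Rac.
  + by [].
- case=> q; rewrite inE => /andP [nq Rpq] ->; rewrite inE /phi.
  case: (boolP (isac p q)) => h.
    move: h; rewrite /isac => /orP [] /andP [/eqP e _]; by rewrite e /= eqxx ?orbT.
  rewrite /= Rpq h !andbT; apply: contra nq => /eqP [e]; by rewrite e.
Qed.

Lemma ordY_inl p : ord RY (inl p) = ord RA p.
Proof. by rewrite /ord N_inl card_imset //; exact: phi_inj. Qed.

Lemma inlE (x y : V) : (inl x == inl y :> Y) = (x == y).
Proof. by apply/eqP/eqP => [[]|->]. Qed.

Lemma N_b2 : [set v | (v != b2) && RY b2 v] = inl a |: (inl c1 |: [set e1]).
Proof.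
apply/setP => v; rewrite !inE; case: v => [q|[]] //=; by rewrite ?inlE ?orbF.
Qed.

Lemma ordY_b2 : ord RY b2 = 3.
Proof.
rewrite /ord N_b2 !cardsU1 cards1 !inE /=.
by rewrite inlE (negbTE ac).
Qed.

Lemma ordY_e1 : ord RY e1 = 1.
Proof.
rewrite /ord; have -> : [set v | (v != e1) && RY e1 v] = [set b2].
  by apply/setP => v; rewrite !inE; case: v => [q|[]].
exact: cards1.
Qed.


Lemma RY_lift p q : RA p q -> connect RY (inl p) (inl q).
Proof.
move=> Rpq; case h: (isac p q).
  move: h; rewrite /isac => /orP [] /andP [/eqP -> /eqP ->].
    apply: (connect_trans (y := b2)); apply: connect1; by rewrite /= eqxx ?orbT.
  apply: (connect_trans (y := b2)); apply: connect1; by rewrite /= eqxx ?orbT.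
by apply: connect1; rewrite /= Rpq h.
Qed.

Lemma connY_a u : connect RY u (inl a).
Proof.
case: u => [p|[]].
- exact: (lift_connect (h := inl) RY_lift ((t_tree A).1 p a)).
- by apply: connect1; rewrite /= eqxx.
- apply: (connect_trans (y := b2)); apply: connect1 => //; by rewrite /= eqxx.
Qed.

Lemma RY_conn u v : connect RY u v.
Proof.
apply: connect_trans (connY_a u) _; rewrite (sym_connect_sym RY_sym); exact: connY_a.
Qed.

Lemma cyc_rot (T : eqType) (e : rel T) (c : seq T) u : 3 <= size c -> uniq c -> cycle e c -> u \in c ->
  exists v s w, [/\ uniq (u :: v :: rcons s w), e u v, path e v (rcons s w), e w u
     & {subset (v :: rcons s w) <= c}].
Proof.
move=> sc uc cc uin; case: (rot_to uin) => i t h.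
have cy : cycle e (u :: t) by rewrite -h rot_cycle.
have ut : uniq (u :: t) by rewrite -h rot_uniq.
have st : size (u :: t) = size c by rewrite -h size_rot.
have sub : {subset t <= c} by move=> z zt; rewrite -(mem_rot i) h inE zt orbT.
case: t {h} st cy ut sub => [|v t] st; first by rewrite -st in sc.
case/lastP: t st => [|s w] st; first by rewrite -st in sc.
rewrite /= rcons_path last_rcons => /andP [euv /andP [pv ewu]] ut sub.
by exists v, s, w; split.
Qed.

Definition isinl (u : Y) := if u is inl _ then true else false.

Lemma path_mapY x p : all isinl (x :: p) -> path (adj RY) x p -> path (adj RA) (fY x) (map fY p).
Proof.
elim: p x => [|y p IH] x //= /and3P [ix iy ip] /andP [/andP [nxy Rxy] pp].
apply/andP; split; last by apply: IH => //=; rewrite iy.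
move: ix iy nxy Rxy; clear; case: x => [p'|//]; case: y => [q|//] _ _ /=.
rewrite inlE => nxy /andP [Rxy _]; by rewrite /adj nxy Rxy.
Qed.

Lemma uniq_mapY s : all isinl s -> uniq s -> uniq (map fY s).
Proof.
move=> ia us; rewrite map_inj_in_uniq // => x y xs ys.
move/allP: ia => ia; move: (ia x xs) (ia y ys); case: x {xs} => [p|//]; case: y {ys} => [q|//] _ _ /=.
by move=> ->.
Qed.

Lemma Y_acyc c : 3 <= size c -> uniq c -> ~~ cycle (adj RY) c.
Proof.
move=> sc uc; apply/negP => cyc.
have Ae := (t_tree A).2.
have ne1 : e1 \notin c.
  apply/negP => e1c; have [v [s [w [u' ev _ ew _]]]] := cyc_rot sc uc cyc e1c.
  have vb : v = b2 by move: ev; case: v {u'} => [q|[]] //= /andP [].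
  have wb : w = b2 by move: ew; case: w {u'} => [q|[]] //= /andP [].
  move: u' => /= /andP [_ /andP [+ _]]; by rewrite vb wb mem_rcons mem_head.
case: (boolP (b2 \in c)) => b2c.
  have [v [s [w [u' ev pv ew sub]]]] := cyc_rot sc uc cyc b2c.
  have vc : v \in c by apply: sub; exact: mem_head.
  have wc : w \in c by apply: sub; rewrite inE mem_rcons mem_head orbT.
  have allL : all isinl (v :: rcons s w).
    apply/allP => z zL; have zc := sub _ zL.
    move: u' => /= /andP [b2L _].
    case: z zL zc => [q|[]] // zL zc.
      by move: b2L; rewrite zL.
    by move: ne1; rewrite zc.
  move: (allL) => /= /andP [iv _].
  have iw : isinl w by move/allP: allL; apply; rewrite inE mem_rcons mem_head orbT.
  case: v iv ev pv vc u' allL {sub} => [qv|//] _ ev pv vc u' allL.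
  case: w iw ew pv wc u' allL => [qw|//] _ ew pv wc u' allL.
  move: ev ew => /andP [_ ev] /andP [_ ew]; move: ev ew; rewrite /= => ev ew.
  have nvw : qv != qw.
    move: u' => /= /and3P [_ + _]; rewrite mem_rcons inE negb_or => /andP [+ _].
    by rewrite inlE.
  have acvw : isac qv qw.
    move: ev ew nvw; rewrite /isac => /orP [] /eqP -> /orP [] /eqP ->; by rewrite ?eqxx //= ?orbT.
  case: s pv u' allL => [|z s] pv u' allL.
    by move: pv => /= /andP [/andP [_]]; rewrite /= acvw andbF.
  move: u' => /= /andP [_ u''].
  have RAw : RA qw qv.
    move: acvw; rewrite /isac => /orP [] /andP [/eqP -> /eqP ->]; by rewrite ?Rac // RAsym Rac.
  set L := qv :: map fY (rcons (z :: s) (inl qw)).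
  have sL : 3 <= size L by rewrite /L /= size_map size_rcons.
  have uL : uniq L by exact: (uniq_mapY allL u'').
  have cL : cycle (adj RA) L.
    suff h : path (adj RA) qv (rcons (map fY (rcons (z :: s) (inl qw))) qv) by exact: h.
    rewrite rcons_path; apply/andP; split.
      exact: (path_mapY allL pv).
    have -> : qv = fY (inl qv) by []. rewrite last_map last_rcons /= /adj RAw andbT eq_sym; exact: nvw.
  by move: (Ae L sL uL); rewrite cL.
have allc : all isinl c.
  apply/allP => z zc; case: z zc => [q|[]] // zc.
    by rewrite zc in b2c.
  by rewrite zc in ne1.
case: c sc uc cyc allc {b2c ne1} => [|x t] // sc uc cyc allc.
have := Ae (map fY (x :: t)); rewrite size_map => /(_ sc (uniq_mapY allc uc)).
apply/negP/negPn.
suff h : path (adj RA) (fY x) (map fY (rcons t x)) by rewrite map_rcons in h; exact: h.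
apply: path_mapY => //.
move: allc; rewrite /= all_rcons => /andP [-> ->]; by rewrite !andbT.
Qed.

Lemma Y_tree : is_tree RY.
Proof. split; [exact: RY_conn | exact: Y_acyc]. Qed.

Lemma Y_has_ram : exists u, is_ram RY u.
Proof. by exists (inl a); rewrite /is_ram ordY_inl. Qed.

Lemma Y_vert u : is_endpoint RY u || is_ram RY u.
Proof.
case: u => [p|[]]; rewrite /is_endpoint /is_ram ?ordY_inl ?ordY_b2 ?ordY_e1 //.
exact: (@t_vert _ A p).
Qed.

Lemma Y_lab_ram u : is_ram RY u -> exists l, [/\ labY u = Some l, P l & le_ext (ord RY u) l].
Proof.
case: u => [p|[]]; rewrite /is_ram ?ordY_inl ?ordY_b2 ?ordY_e1 //= => h.
  exact: (@t_lab_ram _ A p h).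
have [l [hl Pl le]] := @t_lab_ram _ A a ram.
exists l; split => //; move: le; case: l {hl Pl} => [n|] //= h'.
exact: leq_trans ram h'.
Qed.

Lemma Y_lab_end u : is_endpoint RY u -> labY u = None.
Proof.
case: u => [p|[]]; rewrite /is_endpoint ?ordY_inl ?ordY_b2 ?ordY_e1 //= => h.
exact: (@t_lab_end _ A p h).
Qed.

Definition Yobj : tobj P := @TObj P _ RY labY RY_refl RY_sym Y_tree Y_has_ram Y_vert Y_lab_ram Y_lab_end.

Lemma RY_RA u v : RY u v -> RA (fY u) (fY v).
Proof.
case: u => [p|[]]; case: v => [q|[]] //= ; rewrite ?RArefl //.
- by case/andP.
- by case/orP => /eqP ->; rewrite ?RArefl // RAsym.
- by case/orP => /eqP ->; rewrite ?RArefl.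
Qed.

Lemma fY_epi : monotone_epi RY RA fY.
Proof.
split; first exact: RY_RA.
split.
  move=> p q Rpq; case h: (isac p q).
    move: h; rewrite /isac => /orP [] /andP [/eqP -> /eqP ->].
      by exists b2, (inl c1); split => //=; rewrite eqxx orbT.
    by exists (inl c1), b2; split => //=; rewrite eqxx orbT.
  by exists (inl p), (inl q); split => //=; rewrite Rpq h.
move=> S cS u v; rewrite !inE => uS vS.
set S' := fY @^-1: S.
set rS := fun x y => [&& x \in S', y \in S' & RY x y].
have sym' : symmetric rS.
  by move=> x y; rewrite /rS RY_sym andbA [(x \in S') && _]andbC -andbA.
have toinl : forall w, fY w \in S -> connect rS w (inl (fY w)).
  case=> [p|[]] /= h; first exact: connect0.
    by apply: connect1; rewrite /rS !inE /= h eqxx.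
  apply: (connect_trans (y := b2)); apply: connect1; by rewrite /rS !inE /= h ?eqxx.
have lift : connect rS (inl (fY u)) (inl (fY v)).
  apply: (lift_connect (e := fun x y => [&& x \in S, y \in S & RA x y]) (h := inl)) (cS _ _ uS vS).
  move=> p q /and3P [pS qS Rpq]; case h: (isac p q).
    move: h pS qS; rewrite /isac => /orP [] /andP [/eqP -> /eqP ->] pS qS.
      apply: (connect_trans (y := b2)); apply: connect1; by rewrite /rS !inE /= ?pS ?qS ?eqxx ?orbT.
    apply: (connect_trans (y := b2)); apply: connect1; by rewrite /rS !inE /= ?pS ?qS ?eqxx ?orbT.
  by apply: connect1; rewrite /rS !inE /= pS qS Rpq h.
apply: connect_trans (toinl u uS) (connect_trans lift _).
rewrite (sym_connect_sym sym'); exact: toinl.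
Qed.


Lemma fY_wc : weakly_coherent RY RA fY.
Proof.
move=> p hp; exists (inl p); split => //=.
- by rewrite ordY_inl.
- move=> u1 u2 h1 h2 /and3P [_ _ cA].
  have nu : forall u, fY u != p -> u != inl p by move=> u; apply: contra => /eqP ->.
  rewrite /same_comp (nu _ h1) (nu _ h2) /=.
  set rp := fun x y => [&& x != inl p, y != inl p & RY x y].
  have sym' : symmetric rp.
    by move=> x y; rewrite /rp RY_sym andbA [(x != _) && _]andbC -andbA.
  have toinl : forall w, fY w != p -> connect rp w (inl (fY w)).
    case=> [q|[]] /= h; first exact: connect0.
      by apply: connect1; rewrite /rp inlE h /= eqxx.
    apply: (connect_trans (y := b2)); apply: connect1; by rewrite /rp ?inlE ?h /= ?eqxx.
  have lift : connect rp (inl (fY u1)) (inl (fY u2)).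
    apply: (lift_connect (e := fun x y => [&& x != p, y != p & RA x y]) (h := inl)) cA.
    move=> q q' /and3P [qS qS' Rqq]; case h: (isac q q').
      move: h qS qS'; rewrite /isac => /orP [] /andP [/eqP -> /eqP ->] qS qS'.
        apply: (connect_trans (y := b2)); apply: connect1; by rewrite /rp ?inlE /= ?qS ?qS' ?eqxx ?orbT.
      apply: (connect_trans (y := b2)); apply: connect1; by rewrite /rp ?inlE /= ?qS ?qS' ?eqxx ?orbT.
    by apply: connect1; rewrite /rp !inlE /= qS qS' Rqq h.
  apply: connect_trans (toinl u1 h1) (connect_trans lift _).
  rewrite (sym_connect_sym sym'); exact: toinl.
- move=> u1 u2 h1 h2 /and3P [n1 n2 cY].
  rewrite /same_comp h1 h2 /=.
  case: (eqVneq p a) => [ep|npa].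
    subst p.
    pose g (u : Y) := match u with inl q => q | inr _ => c1 end.
    have gE : forall u, fY u != a -> g u = fY u by case=> [q|[]] //=; rewrite eqxx.
    rewrite -(gE _ h1) -(gE _ h2).
    apply: (lift_connect (h := g)) cY => x y /and3P [nx ny Rxy].
    case: x nx Rxy => [q|[]]; case: y ny => [q'|[]] //=; rewrite ?inlE => ny nx Rxy;
      try exact: connect0.
    + by apply: connect1; rewrite nx ny; case/andP: Rxy.
    + move: Rxy; rewrite (negbTE nx) /= => /eqP ->; exact: connect0.
    + move: Rxy; rewrite (negbTE ny) /= => /eqP ->; exact: connect0.
  apply: (lift_connect (h := fY)) cY => x y /and3P [nx ny Rxy].
  apply: connect1; rewrite (RY_RA Rxy) andbT.
  have hh : forall w, w != inl p -> fY w != p.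
    case=> [q|[]] //=; rewrite ?inlE // => _; by rewrite eq_sym.
  by rewrite !hh.
Qed.

Lemma fY_lab : forall p (l : ext_nat), 3 <= ord RA p -> tlab p = Some l ->
  forall b, wc_witness RY RA fY p b -> labY b = Some l.
Proof.
move=> p l hp hl [q|[]] [/= fq ordq _ _].
- by rewrite /= fq.
- by rewrite /= fq.
- by move: ordq; rewrite ordY_e1 => h; move: (leq_trans hp h).
Qed.

Lemma endY (y : EndT A) : is_endpoint RY (inl (val y)).
Proof. by rewrite /is_endpoint ordY_inl; exact: (valP y). Qed.

Definition emY (y : EndT A) : EndT Yobj := exist _ (inl (val y) : tV Yobj) (endY y).

Definition fArr : tarr Yobj A := @TArr P Yobj A fY emY fY_epi fY_wc fY_lab (fun y => erefl).

Lemma e1_end : is_endpoint (tR Yobj) (e1 : tV Yobj).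
Proof. by rewrite /is_endpoint /= ordY_e1. Qed.

Lemma fArr_e1 : pm fArr (val (exist _ (e1 : tV Yobj) e1_end : EndT Yobj)) = a.
Proof. by []. Qed.

End Ext.

Lemma ext_obj (P : ext_nat -> Prop) (A : tobj P) (a : tV A) : is_ram (tR A) a ->
  exists (Y : tobj P) (f : tarr Y A) (e : EndT Y), pm f (val e) = a.
Proof.
move=> ram.
have : 0 < ord (tR A) a by apply: leq_trans ram.
rewrite /ord => /card_gt0P [c1]; rewrite inE => /andP [ca Rac].
have ac : a != c1 by rewrite eq_sym.
exists (Yobj ram ac Rac), (fArr ram ac Rac), (@exist _ (fun x => is_endpoint (tR (Yobj ram ac Rac)) x) _ (e1_end ram ac Rac)).
exact: fArr_e1.
Qed.


Lemma part2 (P : ext_nat -> Prop) (F : nat -> tobj P) (fb : forall n, tarr (F n.+1) (F n))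
  (Hfr : fraisse_seq fb) : dense_in_Lim fb (in_E fb).
Proof.
move=> x xL n.
case/orP: (@t_vert _ (F n) (x n)) => h.
  have [e [eE en]] := E_of fb (exist _ (x n) h : EndT (F n)).
  exists e; split => // i hi; exact: (inLim_down eE.1 xL en hi).
have [Y [f [e1' fe]]] := ext_obj h.
have [k [g [hg _]]] := Hfr.2 n Y f.
have [e [eE en]] := E_of fb (em g e1').
exists e; split => // i hi; apply: (inLim_down eE.1 xL _ hi).
by rewrite -(inLim_pcomp eE.1 n k) en -hg (pm_em g e1') fe.
Qed.

Theorem mainTheorem5 (P : ext_nat -> Prop)
  (HP : forall n, P (Some n) -> 3 <= n)
  (F : nat -> tobj P) (fb : forall n, tarr (F n.+1) (F n))
  (Hfr : fraisse_seq fb) :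
  (forall x, in_E fb x -> isEndLim fb x) /\ dense_in_Lim fb (in_E fb).
Proof.
split; [move=> x; exact: part1 | exact: part2].
Qed.
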